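(* Let $(E,\mathcal{I})$ be the partition matroid given by a partition $E_1,\dots,E_b$ of $E$ and integers $k_z$ with $2\le k_z\le|E_z|$, and let $\gamma=\min_{z\in[b]}\lfloor k_z/2\rfloor/k_z$. Suppose $f:2^E\times O^E\to\mathbb{R}_{\ge0}$ is worst-case monotone, worst-case submodular and adaptive submodular with respect to $p(\phi)$, and satisfies minimal dependency. Then the adaptive hybrid policy $\pi^m=\pi^{mw}@\pi^{ma}$ has robustness ratio $\alpha(\pi^m)\ge\frac{\gamma}{\gamma+1}$ (i.e. $f_{wc}(\pi^m)\ge\frac{\gamma}{\gamma+1}f_{wc}(\pi^*_{wc})$ and $f_{avg}(\pi^m)\ge\frac{\gamma}{\gamma+1}f_{avg}(\pi^*_{avg})$).
   Context: Setting. $E$ is a finite set of $n$ items and $O$ a finite set of states. A realization is a function $\phi:E\to O$; $p$ is a probability distribution (prior) on the set of all realizations, $\Phi$ denotes a random realization with law $p$, and $U^+=\{\phi: p(\phi)>0\}$. A partial realization is a function $\psi:S\to O$ with $S\subseteq E$, $\mathrm{dom}(\psi)=S$; it is identified with the set of pairs $\{(e,\psi(e)):e\in S\}$, so $\psi\subseteq\psi'$ means $\mathrm{dom}(\psi)\subseteq\mathrm{dom}(\psi')$ and they agree on $\mathrm{dom}(\psi)$. A realization $\phi$ is consistent with $\psi$, written $\phi\sim\psi$, if it agrees with $\psi$ on $\mathrm{dom}(\psi)$. Only partial realizations with $\Pr[\Phi\sim\psi]>0$ are considered, and $p(\phi\mid\psi)=\Pr[\Phi=\phi\mid\Phi\sim\psi]$.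 For $S\subseteq E$ and a partial realization $\psi$, $f(S,\psi)=\mathbb{E}[f(S,\Phi)\mid\Phi\sim\psi]$. For $e\notin\mathrm{dom}(\psi)$, let $O(e,\psi)=\{o\in O:\exists\phi\text{ with }p(\phi\mid\psi)>0,\ \phi(e)=o\}$ and define the worst-case marginal utility $f_{wc}(e\mid\psi)=\min_{o\in O(e,\psi)}\{f(\mathrm{dom}(\psi)\cup\{e\},\psi\cup\{(e,o)\})-f(\mathrm{dom}(\psi),\psi)\}$ and the expected marginal utility $f_{avg}(e\mid\psi)=\mathbb{E}[f(\mathrm{dom}(\psi)\cup\{e\},\Phi)-f(\mathrm{dom}(\psi),\Phi)\mid\Phi\sim\psi]$. $f$ is worst-case submodular if $f_{wc}(e\mid\psi)\ge f_{wc}(e\mid\psi')$ for all partial realizations $\psi\subseteq\psi'$ and all $e\in E\setminus\mathrm{dom}(\psi')$; it is worst-case monotone if $f_{wc}(e\mid\psi)\ge0$ for all $\psi$ and $e\notin\mathrm{dom}(\psi)$. $f$ is adaptive submodular if $f_{avg}(e\mid\psi)\ge f_{avg}(e\mid\psi')$ for all $\psi\subseteq\psi'$ and $e\in E\setminus\mathrm{dom}(\psi')$, and adaptive monotone if $f_{avg}(e\mid\psi)\ge0$ always. $f$ satisfies minimal dependency if $f(\mathrm{dom}(\psi),\psi)=f(\mathrm{dom}(\psi),\phi)$ for every partial realization $\psi$ and every $\phi\in U^+$ with $\phi\sim\psi$. Policies. A (deterministic) policy $\pi$ is a rule which, given the current observation (the partial realization of the items selected so far), either selects a new item or stops; after an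 item $e$ is selected under realization $\phi$, the state $\phi(e)$ is observed. $E(\pi,\phi)$ is the set of items selected by $\pi$ under $\phi$. $f_{avg}(\pi)=\mathbb{E}[f(E(\pi,\Phi),\Phi)]$ and $f_{wc}(\pi)=\min_{\phi\in U^+}f(E(\pi,\phi),\phi)$. The concatenation $\pi@\pi'$ runs $\pi$ and then runs $\pi'$ from scratch, ignoring the observations obtained by $\pi$; its selected set is the union of the two. $\pi^*_{wc}$ (resp. $\pi^*_{avg}$) maximizes $f_{wc}(\pi)$ (resp. $f_{avg}(\pi)$) over policies with $E(\pi,\phi)\in\mathcal{I}$ for all $\phi\in U^+$; the robustness ratio is $\alpha(\pi)=\min\{f_{wc}(\pi)/f_{wc}(\pi^*_{wc}),\ f_{avg}(\pi)/f_{avg}(\pi^*_{avg})\}$. Partition matroid: $\mathcal{I}=\{I\subseteq E:|I\cap E_z|\le k_z\ \forall z\in[b]\}$. Policy $\pi^{mw}$: starting from the empty observation $\psi=\emptyset$, for $z=1,\dots,b$ in turn, perform $\lfloor k_z/2\rfloor$ iterations, each selecting $e\in\arg\max_{e\in E_z\setminus\mathrm{dom}(\psi)}f_{wc}(e\mid\psi)$ for the current observation $\psi$, observing $\Phi(e)$ and adding $(e,\Phi(e))$ to $\psi$. Policy $\pi^{ma}$: identical except that each meta-round $z$ performs $\lceil k_z/2\rceil$ iterations and uses $f_{avg}(e\mid\psi)$ in place of $f_{wc}(e\mid\psi)$. Ties are broken arbitrarily. $\pi^m=\pi^{mw}@\pi^{ma}$. *)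

(* Defs.v *)
From HB Require Import structures.
From mathcomp Require Import all_boot all_order all_algebra.
From mathcomp Require Import reals.
Set Implicit Arguments. Unset Strict Implicit. Unset Printing Implicit Defensive.
Import Order.TTheory GRing.Theory Num.Theory.
Local Open Scope ring_scope.

Section Adaptive.
Variables (R : realType) (E O : finType).
(* realizations phi : E -> O; partial realizations psi : E -> option O,
   with dom psi = {e | psi e <> None} *)
Variable p : {ffun E -> O} -> R.
Variable f : {set E} -> {ffun E -> O} -> R.

Definition pdom (psi : {ffun E -> option O}) : {set E} :=
  [set e | psi e != None].

Definition consistent (phi : {ffun E -> O}) (psi : {ffun E -> option O}) : bool :=
  [forall e, (psi e != None) ==> (psi e == Some (phi e))].

Definition subpr (psi psi' : {ffun E -> option O}) : bool :=
  [forall e, (psi e != None) ==> (psi' e == psi e)].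

Definition prob (psi : {ffun E -> option O}) : R :=
  \sum_(phi | consistent phi psi) p phi.

Definition condp (phi : {ffun E -> O}) (psi : {ffun E -> option O}) : R :=
  if consistent phi psi then p phi / prob psi else 0.

Definition fexp (S : {set E}) (psi : {ffun E -> option O}) : R :=
  \sum_phi condp phi psi * f S phi.

Definition extend (psi : {ffun E -> option O}) (e : E) (o : O)
  : {ffun E -> option O} :=
  [ffun x => if x == e then Some o else psi x].

Definition Oset (e : E) (psi : {ffun E -> option O}) : {set O} :=
  [set o | [exists phi, (0 < condp phi psi) && (phi e == o)]].

(* minimum of F over a finite set A (0 if A is empty; only used on nonempty A) *)
Definition min_over (T : finType) (A : {set T}) (F : T -> R) : R :=
  match [pick x in A] with
  | Some x0 => \big[Num.min/F x0]_(x in A) F x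
  | None => 0
  end.

Definition fwc_marg (e : E) (psi : {ffun E -> option O}) : R :=
  min_over (Oset e psi)
    (fun o => fexp (pdom psi :|: [set e]) (extend psi e o) - fexp (pdom psi) psi).

Definition favg_marg (e : E) (psi : {ffun E -> option O}) : R :=
  \sum_phi condp phi psi * (f (pdom psi :|: [set e]) phi - f (pdom psi) phi).

Definition is_prior : Prop :=
  (forall phi, 0 <= p phi) /\ \sum_phi p phi = 1.

Definition wc_monotone : Prop :=
  forall psi e, 0 < prob psi -> e \notin pdom psi -> 0 <= fwc_marg e psi.

Definition wc_submodular : Prop :=
  forall psi psi' e, 0 < prob psi -> 0 < prob psi' -> subpr psi psi' ->
    e \notin pdom psi' -> fwc_marg e psi' <= fwc_marg e psi.

Definition adaptive_submodular : Prop :=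
  forall psi psi' e, 0 < prob psi -> 0 < prob psi' -> subpr psi psi' ->
    e \notin pdom psi' -> favg_marg e psi' <= favg_marg e psi.

Definition minimal_dependency : Prop :=
  forall psi phi, 0 < prob psi -> 0 < p phi -> consistent phi psi ->
    fexp (pdom psi) psi = f (pdom psi) phi.

(* A deterministic policy: given the current observation, select an item
   (Some e) or stop (None).  Selecting an already observed item is a stop. *)
Definition policy := {ffun E -> option O} -> option E.

Definition empty_obs : {ffun E -> option O} := [ffun => None].

Definition pstep (pi : policy) (phi : {ffun E -> O}) (psi : {ffun E -> option O})
  : {ffun E -> option O} :=
  match pi psi with Some e => extend psi e (phi e) | None => psi end.

Definition obs_after (pi : policy) (phi : {ffun E -> O}) (t : nat) :=
  iter t (pstep pi phi) empty_obs.

(* E(pi, phi): at most #|E| effective steps are possible *)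
Definition selected (pi : policy) (phi : {ffun E -> O}) : {set E} :=
  pdom (obs_after pi phi #|E|).

Definition avg_value (X : {ffun E -> O} -> {set E}) : R :=
  \sum_phi p phi * f (X phi) phi.

Definition wc_value (X : {ffun E -> O} -> {set E}) : R :=
  min_over [set phi | 0 < p phi] (fun phi => f (X phi) phi).

(* pi@pi' : selected set is the union *)
Definition concat_selected (pi1 pi2 : policy) (phi : {ffun E -> O}) : {set E} :=
  selected pi1 phi :|: selected pi2 phi.

Section Partition.
Variables (b : nat) (Ez : 'I_b -> {set E}) (k : 'I_b -> nat).

Definition in_matroid (S : {set E}) : bool :=
  [forall z, #|S :&: Ez z| <= k z]%N.

Definition feasible (pi : policy) : Prop :=
  forall phi, 0 < p phi -> in_matroid (selected pi phi).

Definition schedule (c : 'I_b -> nat) : seq 'I_b :=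
  flatten [seq nseq (c z) z | z <- enum 'I_b].

(* pi runs the meta-round greedy rule with score function `score`,
   with ties broken arbitrarily (as a function of the observation). *)
Definition greedy_policy (c : 'I_b -> nat) (score : E -> {ffun E -> option O} -> R)
    (pi : policy) : Prop :=
  forall phi, 0 < p phi ->
    (forall (z0 : 'I_b) (t : nat), (t < size (schedule c))%N ->
      let z := nth z0 (schedule c) t in
      let psi := obs_after pi phi t in
      exists2 e, pi psi = Some e &
        [/\ e \in Ez z, e \notin pdom psi &
            forall e', e' \in Ez z -> e' \notin pdom psi -> score e' psi <= score e psi])
    /\ pi (obs_after pi phi (size (schedule c))) = None.

Definition is_pi_mw (pi : policy) : Prop :=
  greedy_policy (fun z => (k z)./2) fwc_marg pi.

Definition is_pi_ma (pi : policy) : Prop :=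
  greedy_policy (fun z => uphalf (k z)) favg_marg pi.

End Partition.
End Adaptive.

(* gamma = min_z floor(k_z/2)/k_z  (b > 0; all terms are <= 1/2 < 1) *)
Definition gamma (R : realType) (b : nat) (k : 'I_b -> nat) : R :=
  \big[Num.min/1]_(z < b) (((k z)./2)%:R / (k z)%:R).

(* Main.v *)
Require Import Defs.
From HB Require Import structures.
From mathcomp Require Import all_boot all_order all_algebra.
From mathcomp Require Import reals.
Import Order.TTheory GRing.Theory Num.Theory.
Local Open Scope ring_scope.
Set Implicit Arguments. Unset Strict Implicit. Unset Printing Implicit Defensive.

Lemma count_sched b (c : 'I_b -> nat) z z0 :
  #|[pred t : 'I_(size (schedule c)) | nth z0 (schedule c) t == z]| = c z.
Proof.
rewrite -sum1_card.
transitivity (\sum_(0 <= t < size (schedule c) | nth z0 (schedule c) t == z) 1)%N.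
  by rewrite big_mkord; apply: eq_bigl => t.
rewrite -(big_nth z0 (fun x => x == z) (fun _ => 1%N)) sum1_count.
rewrite /schedule count_flatten -map_comp.
rewrite (eq_map (g := fun z' => ((z' == z) * c z')%N)); last first.
  by move=> z' /=; rewrite count_nseq.
rewrite sumnE big_map big_enum /= (bigD1 z) //= eqxx mul1n big1 ?addn0 // => i /negbTE ->.
by [].
Qed.

Section Basics.
Variables (R : realType) (E O : finType).
Variable p : {ffun E -> O} -> R.
Variable f : {set E} -> {ffun E -> O} -> R.
Hypothesis p_ge0 : forall phi, 0 <= p phi.

Local Notation T := {ffun E -> O}.
Local Notation Ps := {ffun E -> option O}.

Lemma consistentP (phi : T) (psi : Ps) :
  reflect (forall e o, psi e = Some o -> phi e = o) (consistent phi psi).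
Proof.
apply: (iffP forallP) => [H e o He|H e].
  by move: (H e); rewrite He /= => /eqP [].
by apply/implyP; case He: (psi e) => [o|] //= _; rewrite (H e o He).
Qed.

Lemma subprP (psi psi' : Ps) :
  reflect (forall e o, psi e = Some o -> psi' e = Some o) (subpr psi psi').
Proof.
apply: (iffP forallP) => [H e o He|H e].
  by move: (H e); rewrite He /= => /eqP ->.
by apply/implyP; case He: (psi e) => [o|] //= _; rewrite (H e o He).
Qed.

Lemma in_pdom (psi : Ps) e : (e \in pdom psi) = (psi e != None).
Proof. by rewrite inE. Qed.

Lemma subpr_refl (psi : Ps) : subpr psi psi.
Proof. by apply/subprP. Qed.

Lemma subpr_trans (a b c : Ps) : subpr a b -> subpr b c -> subpr a c.
Proof. by move=> /subprP H1 /subprP H2; apply/subprP => e o /H1 /H2. Qed.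

Lemma consistent_subpr phi (a b : Ps) : subpr a b -> consistent phi b -> consistent phi a.
Proof. by move=> /subprP H1 /consistentP H2; apply/consistentP => e o /H1 /H2. Qed.

Lemma subpr_pdom (a b : Ps) : subpr a b -> pdom a \subset pdom b.
Proof.
move=> /subprP H; apply/subsetP => e; rewrite !in_pdom.
by case He: (a e) => [o|] //= _; rewrite (H e o He).
Qed.

Lemma pdom_extend (psi : Ps) e o : pdom (extend psi e o) = pdom psi :|: [set e].
Proof.
apply/setP => x; rewrite !inE ffunE; by case: (x == e); rewrite ?orbT ?orbF.

Qed.

Lemma extend_in (psi : Ps) e o : psi e = Some o -> extend psi e o = psi.
Proof. by move=> He; apply/ffunP => x; rewrite ffunE; case: eqP => // ->. Qed.

Lemma subpr_extend (psi : Ps) e o : e \notin pdom psi -> subpr psi (extend psi e o).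
Proof.
rewrite in_pdom negbK => /eqP He; apply/subprP => x o' Hx; rewrite ffunE.
by case: eqP => // Exe; rewrite Exe He in Hx.
Qed.

Lemma subpr_extend2 (a b : Ps) e o : subpr a b -> subpr (extend a e o) (extend b e o).
Proof.
move=> /subprP H; apply/subprP => x o'; rewrite !ffunE; case: eqP => // _; exact: H.
Qed.

Lemma consistent_extend phi (psi : Ps) e :
  consistent phi psi -> consistent phi (extend psi e (phi e)).
Proof.
move=> /consistentP H; apply/consistentP => x o; rewrite ffunE.
by case: eqP => [-> [] | _ /H].
Qed.

Lemma consistent_extend_inv phi phi' (psi : Ps) e :
  consistent phi psi -> consistent phi' (extend psi e (phi e)) ->
  consistent phi' psi /\ phi' e = phi e.
Proof.
move=> /consistentP H /consistentP H'; split; last by apply: H'; rewrite ffunE eqxx.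
apply/consistentP => x o Hx; case: (eqVneq x e) => [Exe|nxe].
  rewrite Exe in Hx *; rewrite (H' e (phi e)) ?ffunE ?eqxx //; exact: H.
by apply: H'; rewrite ffunE (negbTE nxe).
Qed.

Lemma consistent_extend_val phi (psi : Ps) e o :
  consistent phi (extend psi e o) -> phi e = o.
Proof. by move=> /consistentP H; apply: H; rewrite ffunE eqxx. Qed.

Lemma prob_ge0 (psi : Ps) : 0 <= prob p psi.
Proof. by apply: sumr_ge0 => i _. Qed.

Lemma prob_ge phi (psi : Ps) : consistent phi psi -> p phi <= prob p psi.
Proof.
move=> H; rewrite /prob (bigD1 phi) //= lerDl; apply: sumr_ge0 => i _; exact: p_ge0.
Qed.

Lemma prob_gt0 phi (psi : Ps) : consistent phi psi -> 0 < p phi -> 0 < prob p psi.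
Proof. by move=> H Hp; apply: lt_le_trans Hp (prob_ge H). Qed.

Lemma condp_ge0 phi (psi : Ps) : 0 <= condp p phi psi.
Proof. rewrite /condp; case: ifP => // _; apply: divr_ge0 => //; exact: prob_ge0. Qed.

Lemma condp_neq0 phi (psi : Ps) : condp p phi psi != 0 -> consistent phi psi /\ 0 < p phi.
Proof.
rewrite /condp; case: ifP; last by rewrite eqxx.
move=> Hc; rewrite mulf_eq0 negb_or => /andP [Hp _]; split => //.
by rewrite lt_def Hp p_ge0.
Qed.

Lemma condp_gt0 phi (psi : Ps) : consistent phi psi -> 0 < p phi -> 0 < condp p phi psi.
Proof.
move=> Hc Hp; rewrite /condp Hc; apply: divr_gt0 => //; exact: prob_gt0 Hp.
Qed.

Lemma prob_ex (psi : Ps) : 0 < prob p psi -> exists phi, consistent phi psi /\ 0 < p phi.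
Proof.
move=> H; case: (boolP [exists phi, consistent phi psi && (0 < p phi)]).
  by move=> /existsP [phi /andP [H1 H2]]; exists phi.
move=> /existsPn Hn; move: H; rewrite /prob big1 ?ltxx // => phi Hc.
move: (Hn phi); rewrite Hc /= => Hp; apply/eqP; rewrite eq_le p_ge0 andbT.
by rewrite leNgt.
Qed.


Lemma min_over_le (U : finType) (A : {set U}) (F : U -> R) x :
  x \in A -> min_over A F <= F x.
Proof.
move=> Hx; rewrite /min_over; case: pickP => [x0 Hx0|H]; last by rewrite H in Hx.
by rewrite (bigD1 x) //= ge_min lexx.
Qed.

Lemma min_over_ex (U : finType) (A : {set U}) (F : U -> R) x :
  x \in A -> exists2 y, y \in A & min_over A F = F y.
Proof.
move=> Hx; rewrite /min_over; case: pickP => [x0 Hx0|H]; last by rewrite H in Hx.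
apply: (big_ind (fun v => exists2 y, y \in A & v = F y)).
- by exists x0.
- move=> a c [y1 H1 ->] [y2 H2 ->]; rewrite minEle.
  by case: ifP => _; [exists y1|exists y2].
- by move=> i Hi; exists i.
Qed.

Definition res (phi : T) (S : {set E}) : Ps :=
  [ffun x => if x \in S then Some (phi x) else None].

Lemma pdom_res phi S : pdom (res phi S) = S.
Proof. by apply/setP => x; rewrite !inE ffunE; case: (x \in S). Qed.

Lemma consistent_res phi S : consistent phi (res phi S).
Proof. by apply/consistentP => x o; rewrite ffunE; case: (x \in S) => // [[]]. Qed.

Lemma Oset_mem phi (psi : Ps) e :
  consistent phi psi -> 0 < p phi -> phi e \in Oset p e psi.
Proof.
move=> Hc Hp; rewrite inE; apply/existsP; exists phi.
by rewrite condp_gt0 // eqxx.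
Qed.

Lemma Oset_ex (psi : Ps) e o : o \in Oset p e psi ->
  exists phi, [/\ consistent phi psi, 0 < p phi & phi e = o].
Proof.
rewrite inE => /existsP [phi /andP [Hc /eqP He]].
have [H1 H2] := condp_neq0 (lt0r_neq0 Hc); by exists phi.
Qed.

Hypothesis md : minimal_dependency p f.

Lemma fexp_md phi (psi : Ps) : consistent phi psi -> 0 < p phi ->
  fexp p f (pdom psi) psi = f (pdom psi) phi.
Proof. by move=> Hc Hp; apply: md => //; exact: prob_gt0 Hp. Qed.

Lemma wc_le_actual phi (psi : Ps) e : consistent phi psi -> 0 < p phi ->
  fwc_marg p f e psi <= f (pdom psi :|: [set e]) phi - f (pdom psi) phi.
Proof.
move=> Hc Hp; rewrite /fwc_marg.
apply: le_trans (min_over_le _ (Oset_mem e Hc Hp)) _.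
have Hc' := consistent_extend e Hc.
by rewrite -(pdom_extend psi e (phi e)) (fexp_md Hc' Hp) (fexp_md Hc Hp).
Qed.

Hypothesis wmono : wc_monotone p f.

Lemma mono1 phi A e : 0 < p phi -> f A phi <= f (A :|: [set e]) phi.
Proof.
move=> Hp; case: (boolP (e \in A)) => He.
  by rewrite (setUidPl _) // sub1set.
have Hc := consistent_res phi A.
have := wc_le_actual e Hc Hp; rewrite pdom_res => H; rewrite -subr_ge0.
apply: le_trans H; apply: wmono; [exact: prob_gt0 Hp | by rewrite pdom_res].
Qed.

Lemma monoU phi A C : 0 < p phi -> f A phi <= f (A :|: C) phi.
Proof.
move=> Hp; move Hn: #|C| => n; elim: n C Hn => [|n IH] C Hn.
  by move/eqP: Hn; rewrite cards_eq0 => /eqP ->; rewrite setU0.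
have : (0 < #|C|)%N by rewrite Hn.
rewrite card_gt0 => /set0Pn [x Hx].
rewrite -(setD1K Hx) setUCA setUC.
apply: le_trans (IH (C :\ x) _) _; first by rewrite (cardsD1 x C) Hx in Hn; case: Hn.
exact: mono1.
Qed.

Lemma mono phi (A B : {set E}) : 0 < p phi -> A \subset B -> f A phi <= f B phi.
Proof. by move=> Hp /setUidPr <-; exact: monoU. Qed.


Section Tower.
Variable Psi : T -> Ps.
Hypothesis HP : forall phi phi', 0 < p phi -> 0 < p phi' ->
  consistent phi' (Psi phi) -> Psi phi' = Psi phi.
Hypothesis HC : forall phi, 0 < p phi -> consistent phi (Psi phi).

Lemma p_cases phi : p phi = 0 \/ 0 < p phi.
Proof. by case: (ltrgt0P (p phi)) => H; [right|have := p_ge0 phi; rewrite leNgt H|left]. Qed.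

Lemma tower_weight phi' : \sum_phi p phi * condp p phi' (Psi phi) = p phi'.
Proof.
case: (p_cases phi') => Hp'.
  rewrite Hp' big1 // => phi _; rewrite /condp; case: ifP => _; last by rewrite mulr0.
  by rewrite Hp' mul0r mulr0.
have Hpr := prob_gt0 (HC Hp') Hp'.
transitivity (\sum_phi (if consistent phi (Psi phi') then p phi else 0) *
                (p phi' / prob p (Psi phi'))).
  apply: eq_bigr => phi _; case: (p_cases phi) => Hp.
    by rewrite Hp mul0r; case: ifP => _; rewrite mul0r.
  rewrite /condp; case: ifP => Hc.
    have E1 := HP Hp Hp' Hc; by rewrite E1 (HC Hp).
  case: ifP => Hc'; last by rewrite !mul0r mulr0.
  have E1 := HP Hp' Hp Hc'; by rewrite E1 (HC Hp') in Hc.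
rewrite -mulr_suml -big_mkcond /= -/(prob p (Psi phi')).
by rewrite mulrCA divff ?mulr1 // lt0r_neq0.
Qed.

Lemma tower (X : T -> R) :
  \sum_phi p phi * X phi =
  \sum_phi p phi * \sum_phi' condp p phi' (Psi phi) * X phi'.
Proof.
under [RHS]eq_bigr => phi _ do rewrite mulr_sumr.
rewrite exchange_big /=; apply: eq_bigr => phi' _.
by rewrite -(tower_weight phi') mulr_suml; apply: eq_bigr => phi _; rewrite mulrA.
Qed.

Definition oset (o : option E) : {set E} := if o is Some e then [set e] else set0.

Variable nx : T -> option E.
Hypothesis Hnx : forall phi phi', 0 < p phi -> 0 < p phi' ->
  consistent phi' (Psi phi) -> nx phi' = nx phi.

Lemma tower_step :
  \sum_phi p phi * (f (pdom (Psi phi) :|: oset (nx phi)) phi - f (pdom (Psi phi)) phi) =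
  \sum_phi p phi * oapp (fun e => favg_marg p f e (Psi phi)) 0 (nx phi).
Proof.
rewrite tower; apply: eq_bigr => phi _; case: (p_cases phi) => Hp.
  by rewrite Hp !mul0r.
congr (_ * _).
transitivity (\sum_phi' condp p phi' (Psi phi) *
  (f (pdom (Psi phi) :|: oset (nx phi)) phi' - f (pdom (Psi phi)) phi')).
  apply: eq_bigr => phi' _; case: (eqVneq (condp p phi' (Psi phi)) 0) => [->|Hn].
    by rewrite !mul0r.
  have [Hc Hp'] := condp_neq0 Hn.
  by rewrite (HP Hp Hp' Hc) (Hnx Hp Hp' Hc).
case: (nx phi) => [e|] //=.
by rewrite setU0 big1 // => phi' _; rewrite subrr mulr0.
Qed.

End Tower.

Lemma obs_afterS (pi : policy E O) phi t :
  obs_after pi phi t.+1 = pstep pi phi (obs_after pi phi t).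
Proof. by []. Qed.

Lemma obs_consistent (pi : policy E O) phi t : consistent phi (obs_after pi phi t).
Proof.
elim: t => [|t IH]; first by apply/consistentP => e o; rewrite ffunE.
rewrite obs_afterS /pstep; case: (pi _) => // e; exact: consistent_extend.
Qed.

Lemma pdom_pstep (pi : policy E O) phi psi :
  pdom (pstep pi phi psi) = pdom psi :|: oset (pi psi).
Proof. by rewrite /pstep; case: (pi psi) => [e|] /=; rewrite ?pdom_extend ?setU0. Qed.

Lemma subpr_pstep (pi : policy E O) phi psi :
  consistent phi psi -> subpr psi (pstep pi phi psi).
Proof.
move=> /consistentP Hc; rewrite /pstep; case: (pi psi) => [e|]; last exact: subpr_refl.
case: (boolP (e \in pdom psi)) => He; last exact: subpr_extend.
move: He; rewrite in_pdom; case He: (psi e) => [o|] // _.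
by rewrite (Hc _ _ He) extend_in ?subpr_refl // (Hc _ _ He).
Qed.

Lemma obs_sub (pi : policy E O) phi t t' : (t <= t')%N ->
  subpr (obs_after pi phi t) (obs_after pi phi t').
Proof.
move=> /subnK <-; elim: (t' - t)%N => [|n IH]; first exact: subpr_refl.
apply: subpr_trans IH _; rewrite addSn obs_afterS; apply: subpr_pstep.
exact: obs_consistent.
Qed.

Lemma obs_P (pi : policy E O) phi phi' t :
  consistent phi' (obs_after pi phi t) -> obs_after pi phi' t = obs_after pi phi t.
Proof.
elim: t => [|t IH] //; rewrite !obs_afterS => Hc.
have Hc0 : consistent phi' (obs_after pi phi t).
  apply: consistent_subpr Hc; apply: subpr_pstep; exact: obs_consistent.
rewrite (IH Hc0); move: Hc; rewrite /pstep; case: (pi _) => // e Hc.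
have [_ ->] := consistent_extend_inv (obs_consistent pi phi t) Hc; by [].
Qed.


Section Greedy.
Variables (b : nat) (Ez : 'I_b -> {set E}) (c : 'I_b -> nat).
Variable score : E -> Ps -> R.
Variable pi : policy E O.
Hypothesis Hg : greedy_policy p Ez c score pi.
Variable z0 : 'I_b.
Local Notation N := (size (schedule c)).

Lemma greedy_step phi t : 0 < p phi -> (t < N)%N ->
  exists2 e, pi (obs_after pi phi t) = Some e &
   [/\ e \in Ez (nth z0 (schedule c) t), e \notin pdom (obs_after pi phi t) &
       forall e', e' \in Ez (nth z0 (schedule c) t) -> e' \notin pdom (obs_after pi phi t) ->
          score e' (obs_after pi phi t) <= score e (obs_after pi phi t)].
Proof. by move=> Hp Ht; have [H _] := Hg Hp; exact: H. Qed.

Lemma greedy_card phi t : 0 < p phi -> (t <= N)%N -> #|pdom (obs_after pi phi t)| = t.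
Proof.
move=> Hp; elim: t => [|t IH] Ht.
  by apply/eqP; rewrite cards_eq0; apply/eqP/setP => x; rewrite !inE ffunE.
have [e He [_ Hn _]] := greedy_step Hp Ht.
by rewrite obs_afterS pdom_pstep He /= setUC cardsU1 Hn IH // ltnW.
Qed.

Lemma greedy_N_le phi : 0 < p phi -> (N <= #|E|)%N.
Proof. by move=> Hp; rewrite -(greedy_card Hp (leqnn N)) max_card. Qed.

Lemma greedy_stop phi t : 0 < p phi -> (N <= t)%N ->
  obs_after pi phi t = obs_after pi phi N.
Proof.
move=> Hp /subnK <-; elim: (t - N)%N => [|n IH] //.
by rewrite addSn obs_afterS IH /pstep; have [_ ->] := Hg Hp.
Qed.

Lemma greedy_selected phi : 0 < p phi -> selected pi phi = pdom (obs_after pi phi N).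
Proof. by move=> Hp; rewrite /selected (greedy_stop Hp (greedy_N_le Hp)). Qed.

Definition gain phi t : R := oapp (fun e => score e (obs_after pi phi t)) 0
                                (pi (obs_after pi phi t)).

End Greedy.


Section Ratio.
Variables (b : nat) (Ez : 'I_b -> {set E}) (k : 'I_b -> nat) (z0 : 'I_b).
Hypothesis Hdisj : forall z1 z2 : 'I_b, z1 != z2 -> [disjoint Ez z1 & Ez z2].
Hypothesis Hcover : forall e : E, exists z : 'I_b, e \in Ez z.
Hypothesis Hk : forall z, (0 < k z)%N.
Variable c : 'I_b -> nat.
Variable g0 : R.
Hypothesis Hg0 : 0 < g0.
Hypothesis Hgc : forall z, g0 * (k z)%:R <= (c z)%:R.
Local Notation N := (size (schedule c)).

Definition pz (e : E) : 'I_b := odflt z0 [pick z | e \in Ez z].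

Lemma pz_in e : e \in Ez (pz e).
Proof.
rewrite /pz; case: pickP => [z //|H]; have [z Hz] := Hcover e; by rewrite H in Hz.
Qed.

Lemma pz_uniq e z : e \in Ez z -> pz e = z.
Proof.
move=> Hz; apply/eqP; apply/negPn/negP => Hn.
have := Hdisj Hn; rewrite disjoint_sym => /disjointFr H.
by move: (H e Hz); rewrite pz_in.
Qed.

Lemma ratio (A : {set E}) (w : E -> R) (g : nat -> R) :
  in_matroid Ez k A -> (forall t, (t < N)%N -> 0 <= g t) ->
  (forall e t, e \in A -> (t < N)%N -> e \in Ez (nth z0 (schedule c) t) -> w e <= g t) ->
  g0 * \sum_(e in A) w e <= \sum_(t < N) g t.
Proof.
move=> /forallP HA Hg Hw.
rewrite (partition_big pz predT) //= (partition_big (fun t : 'I_N => nth z0 (schedule c) t) predT) //=.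
rewrite mulr_sumr; apply: (big_ind2 (fun x y => x <= y)); [by []|by move=> *; apply: lerD|move=> z _].
set Wz := \sum_(e in A | _) _; set Sz := \sum_(t < N | _) _.
have HS : 0 <= Sz by apply: sumr_ge0 => t _; exact: Hg.
have Hcw : (c z)%:R * Wz <= (k z)%:R * Sz.
  rewrite /Wz mulr_sumr.
  apply: le_trans (_ : \sum_(e in A | pz e == z) Sz <= _).
    apply: ler_sum => e /andP [He /eqP Hpz].
    rewrite -(count_sched c z z0) mulr_natl -sumr_const.
    rewrite (eq_bigl (fun t : 'I_N => nth z0 (schedule c) t == z)) //.
    rewrite /Sz; apply: ler_sum => t /eqP Ht; apply: Hw => //.
    by rewrite Ht -Hpz pz_in.
  rewrite sumr_const -[Sz *+ _]mulr_natl ler_wpM2r //.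
  apply: le_trans (_ : (#|A :&: Ez z|)%:R <= _); last by rewrite ler_nat; exact: HA.
  rewrite ler_nat; apply: subset_leq_card; apply/subsetP => e; rewrite !inE.
  by move=> /andP [-> /eqP <-]; rewrite pz_in.
have Hkz : (0 : R) < (k z)%:R by rewrite ltr0n.
case: (lerP 0 Wz) => HW; last by apply: le_trans HS; rewrite pmulr_rle0 // ltW.
have : g0 * (k z)%:R * Wz <= (k z)%:R * Sz.
  by apply: le_trans Hcw; rewrite ler_wpM2r.
by rewrite mulrAC [_ * Sz]mulrC ler_pM2r.
Qed.

End Ratio.


Section Adv.
Hypothesis wsub : wc_submodular p f.
Variable pi' : policy E O.
Variable G : Ps.
Hypothesis HG : 0 < prob p G.

Definition wval e q o := fexp p f (pdom q :|: [set e]) (extend q e o) - fexp p f (pdom q) q.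

Definition choose e (q : Ps) : option O :=
  [pick o in Oset p e q | wval e q o == fwc_marg p f e q].

Definition advstep (st : Ps * Ps) : Ps * Ps :=
  let: (s, q) := st in
  match pi' s with
  | Some e => match (if q e is Some o then Some o else choose e q) with
              | Some o => (extend s e o, extend q e o)
              | None => st end
  | None => st end.

Definition adv t := iter t advstep (empty_obs E O, G).

Definition Inv (st : Ps * Ps) : Prop :=
  [/\ 0 < prob p st.2, subpr st.1 st.2, subpr G st.2,
      pdom st.2 \subset pdom G :|: pdom st.1 &
      fexp p f (pdom st.2) st.2 <=
        fexp p f (pdom G) G + \sum_(e in pdom st.2 :\: pdom G) fwc_marg p f e G].

Lemma choose_some e q : 0 < prob p q -> exists2 o, choose e q = Some o &
   o \in Oset p e q /\ wval e q o = fwc_marg p f e q.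
Proof.
move=> Hq; have [phi [Hc Hp]] := prob_ex Hq.
have [o Ho Hm] := min_over_ex (wval e q) (Oset_mem e Hc Hp).
rewrite /choose; case: pickP => [o' /andP [Ho' /eqP Hv]|H]; first by exists o'.
by move: (H o); rewrite Ho /fwc_marg Hm eqxx.
Qed.

Lemma Inv0 : Inv (empty_obs E O, G).
Proof.
split => /=.
- exact: HG.
- by apply/subprP => e o; rewrite ffunE.
- exact: subpr_refl.
- by rewrite subsetUl.
- by rewrite setDv big_set0 addr0.
Qed.

Lemma advstep_sub st : subpr st.2 (advstep st).2.
Proof.
case: st => s q /=; case: (pi' s) => [e|]; last exact: subpr_refl.
case Hqe: (q e) => [o|].
  by rewrite /= (extend_in Hqe); exact: subpr_refl.
case: (choose e q) => [o|]; last exact: subpr_refl.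
by apply: subpr_extend; rewrite in_pdom Hqe.
Qed.

Lemma advstep_Inv st : Inv st -> Inv (advstep st).
Proof.
case: st => s q [/= Hq Hsq HGq Hdom Hval] /=.
case Hpi: (pi' s) => [e|]; last by split.
case Hqe: (q e) => [o|].
  rewrite (extend_in Hqe); split => //=.
    apply/subprP => x o'; rewrite ffunE; case: eqP => [-> [] <- //|_].
    by move/subprP: Hsq; apply.
  apply: subset_trans Hdom _; rewrite pdom_extend setUA subsetUl //.
have [o Hch [Ho Hw]] := choose_some e Hq; rewrite Hch.
have HeG : e \notin pdom G.
  apply/negP => /(subsetP (subpr_pdom HGq)); by rewrite in_pdom Hqe.
have Heq : e \notin pdom q by rewrite in_pdom Hqe.
split => /=.
- have [phi [Hc Hp <-]] := Oset_ex Ho; apply: prob_gt0 Hp; exact: consistent_extend.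
- exact: subpr_extend2.
- apply: subpr_trans HGq _; exact: subpr_extend.
- rewrite !pdom_extend; apply/subsetP => x; rewrite in_setU => /orP [Hx|].
    by have := subsetP Hdom x Hx; rewrite !in_setU => /orP [->|->]; rewrite ?orbT.
  by rewrite in_set1 => /eqP ->; rewrite !in_setU in_set1 eqxx !orbT.
- have -> : pdom (extend q e o) :\: pdom G = e |: (pdom q :\: pdom G).
    apply/setP => x; rewrite pdom_extend !inE; case: (eqVneq x e) => [->|_] //=.
    by rewrite orbT andbT; move: HeG; rewrite in_pdom.
    by rewrite orbF.
  rewrite big_setU1 ?inE ?(negbTE Heq) ?andbF //=.
  have -> : fexp p f (pdom (extend q e o)) (extend q e o) = fexp p f (pdom q) q + fwc_marg p f e q.
    by rewrite -Hw /wval pdom_extend addrC subrK.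
  rewrite addrCA [X in X <= _]addrC lerD //; first exact: wsub HG Hq HGq Heq.
  by rewrite Hqe andbF.
Qed.

Lemma adv_Inv t : Inv (adv t).
Proof. elim: t => [|t IH]; [exact: Inv0 | exact: advstep_Inv]. Qed.

Lemma adv_sub t t' : (t <= t')%N -> subpr (adv t).2 (adv t').2.
Proof.
move=> /subnK <-; elim: (t' - t)%N => [|n IH]; first exact: subpr_refl.
apply: subpr_trans IH _; rewrite addSn; exact: advstep_sub.
Qed.

Lemma adv_obs phi' T : consistent phi' (adv T).2 ->
  forall t, (t <= T)%N -> obs_after pi' phi' t = (adv t).1.
Proof.
move=> HT; elim => [|t IH] Ht //.
rewrite obs_afterS IH ?(ltnW Ht) //.
have Hc1 : consistent phi' (adv t.+1).2 := consistent_subpr (adv_sub Ht) HT.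
have [Hq _ _ _ _] := adv_Inv t.
rewrite /pstep /adv iterS -/(adv t) in Hc1 *.
move: Hc1 Hq; case: (adv t) => s q /= Hc1 Hq.
case Hpi: (pi' s) => [e|] //.
case Hqe: (q e) => [o|].
  move: Hc1; rewrite Hpi Hqe /= => Hc1.
  by rewrite (consistent_extend_val Hc1).
have [o Hch _] := choose_some e Hq.
move: Hc1; rewrite Hpi Hqe Hch /= => Hc1.
by rewrite (consistent_extend_val Hc1).
Qed.

End Adv.


Lemma wc_value_le (X : T -> {set E}) phi : 0 < p phi -> wc_value p f X <= f (X phi) phi.
Proof. by move=> Hp; apply: min_over_le; rewrite inE. Qed.

Lemma in_matroid_sub b (Ez : 'I_b -> {set E}) k (A B : {set E}) :
  A \subset B -> in_matroid Ez k B -> in_matroid Ez k A.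
Proof.
move=> HAB /forallP H; apply/forallP => z; apply: leq_trans (H z).
by apply: subset_leq_card; apply: setSI.
Qed.

Hypothesis f_ge0 : forall S phi, 0 <= f S phi.

Section WC.
Variables (b : nat) (Ez : 'I_b -> {set E}) (k : 'I_b -> nat) (z0 : 'I_b).
Hypothesis Hdisj : forall z1 z2 : 'I_b, z1 != z2 -> [disjoint Ez z1 & Ez z2].
Hypothesis Hcover : forall e : E, exists z : 'I_b, e \in Ez z.
Hypothesis Hk : forall z, (0 < k z)%N.
Hypothesis wsub : wc_submodular p f.
Variable c : 'I_b -> nat.
Variable g0 : R.
Hypothesis Hg0 : 0 < g0.
Hypothesis Hgc : forall z, g0 * (k z)%:R <= (c z)%:R.
Variable pim : policy E O.
Hypothesis Hgr : greedy_policy p Ez c (fwc_marg p f) pim.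
Local Notation N := (size (schedule c)).

Lemma wc_gains phi : 0 < p phi ->
  \sum_(t < N) gain (fwc_marg p f) pim phi t <= f (pdom (obs_after pim phi N)) phi.
Proof.
move=> Hp.
apply: le_trans (_ : \sum_(t < N) (f (pdom (obs_after pim phi t.+1)) phi -
                                  f (pdom (obs_after pim phi t)) phi) <= _).
  apply: ler_sum => t _.
  have [e He [_ Hn _]] := greedy_step Hgr z0 Hp (ltn_ord t).
  rewrite /gain He obs_afterS pdom_pstep He /=.
  exact: wc_le_actual (obs_consistent _ _ _) Hp.
rewrite -(big_mkord xpredT (fun t => f (pdom (obs_after pim phi t.+1)) phi -
                                  f (pdom (obs_after pim phi t)) phi)).
rewrite telescope_sumr // gerDl oppr_le0; exact: f_ge0.
Qed.

Lemma wc_main pi' : feasible p Ez k pi' -> forall phi, 0 < p phi ->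
  g0 * wc_value p f (selected pi') <= (g0 + 1) * f (selected pim phi) phi.
Proof.
move=> Hfeas phi Hp.
rewrite (greedy_selected Hgr z0 Hp).
set G := obs_after pim phi N.
have HcG : consistent phi G := obs_consistent _ _ _.
have HG : 0 < prob p G := prob_gt0 HcG Hp.
set T := #|E|.
have [HqT Hs Hsub Hdom Hval] := adv_Inv wsub pi' HG T.
move: Hs Hsub Hdom Hval HqT; case Hadv: (adv pi' G T) => [sT qT] /= Hs Hsub Hdom Hval HqT.
have [phi' [Hc' Hp']] := prob_ex HqT.
have Hobs : obs_after pi' phi' T = sT.
  have := adv_obs wsub (pi' := pi') HG (T := T) (phi' := phi'); rewrite Hadv /= => H.
  by rewrite (H Hc' T (leqnn T)) Hadv.
have Hsel : selected pi' phi' = pdom sT by rewrite /selected Hobs.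
set A := pdom qT :\: pdom G.
have HAs : A \subset pdom sT.
  apply/subsetP => x; rewrite inE => /andP [HxG Hxq].
  by have := subsetP Hdom x Hxq; rewrite in_setU (negbTE HxG).
have HmA : in_matroid Ez k A.
  by apply: in_matroid_sub HAs _; rewrite -Hsel; exact: Hfeas.
have H1 : wc_value p f (selected pi') <= f (pdom G) phi + \sum_(e in A) fwc_marg p f e G.
  apply: le_trans (wc_value_le _ Hp') _; rewrite Hsel.
  apply: le_trans (mono Hp' (subpr_pdom Hs)) _.
  by rewrite -(fexp_md Hc' Hp') -(fexp_md HcG Hp).
have H2 : g0 * \sum_(e in A) fwc_marg p f e G <= \sum_(t < N) gain (fwc_marg p f) pim phi t.
  apply: (ratio (z0 := z0) Hcover Hk Hg0 Hgc (A := A) (w := fun e => fwc_marg p f e G) (g := fun t => gain (fwc_marg p f) pim phi t)) => //.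
    move=> t Ht; have [e He [_ Hn _]] := greedy_step Hgr z0 Hp Ht.
    rewrite /gain He /=; apply: wmono => //; apply: prob_gt0 Hp; exact: obs_consistent.
  move=> e t; rewrite inE => /andP [HeG _] Ht Hez.
  have [e' He' [_ Hn Hmax]] := greedy_step Hgr z0 Hp Ht.
  have Hsubt : subpr (obs_after pim phi t) G by apply: obs_sub; exact: ltnW.
  have Hpt : 0 < prob p (obs_after pim phi t) := prob_gt0 (obs_consistent _ _ _) Hp.
  rewrite /gain He' /=; apply: le_trans (Hmax e Hez _); first exact: wsub.
  by apply: contra HeG; apply/subsetP/subpr_pdom.
have H3 := wc_gains Hp.
apply: le_trans (_ : g0 * (f (pdom G) phi + \sum_(e in A) fwc_marg p f e G) <= _).
  by rewrite ler_wpM2l // ltW.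
by rewrite mulrDl mulrDr mul1r lerD2l; apply: le_trans H2 H3.
Qed.

End WC.


Definition join (a b : Ps) : Ps := [ffun x => if a x is Some o then Some o else b x].

Lemma pdom_join a b : pdom (join a b) = pdom a :|: pdom b.
Proof. by apply/setP => x; rewrite !inE ffunE; case: (a x). Qed.

Lemma join_cons phi a b : consistent phi a -> consistent phi b -> consistent phi (join a b).
Proof.
move=> /consistentP Ha /consistentP Hb; apply/consistentP => x o; rewrite ffunE.
case Hax: (a x) => [o'|]; [move=> [<-]; exact: Ha | exact: Hb].
Qed.

Lemma join_cons_inv phi phi' a b : consistent phi a -> consistent phi b ->
  consistent phi' (join a b) -> consistent phi' a /\ consistent phi' b.
Proof.
move=> /consistentP Ha /consistentP Hb /consistentP H; split; apply/consistentP => x o Hx.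
  by apply: H; rewrite ffunE Hx.
apply: H; rewrite ffunE; case Hax: (a x) => [o'|] //.
by rewrite -(Ha _ _ Hax) -(Hb _ _ Hx).
Qed.

Lemma subpr_join a b : subpr a (join a b).
Proof. by apply/subprP => x o Hx; rewrite ffunE Hx. Qed.

Lemma favg_in e (psi : Ps) : e \in pdom psi -> favg_marg p f e psi = 0.
Proof.
move=> He; rewrite /favg_marg (setUidPl _) ?sub1set //.
by rewrite big1 // => phi _; rewrite subrr mulr0.
Qed.

Lemma favg_ge0 e (psi : Ps) : 0 <= favg_marg p f e psi.
Proof.
apply: sumr_ge0 => phi _; case: (eqVneq (condp p phi psi) 0) => [->|Hn].
  by rewrite mul0r.
have [_ Hp] := condp_neq0 Hn.
by apply: mulr_ge0; [exact: condp_ge0 | rewrite subr_ge0; exact: mono1].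
Qed.

Definition Ep (X : T -> R) := \sum_phi p phi * X phi.

Lemma Ep_le (X Y : T -> R) : (forall phi, 0 < p phi -> X phi <= Y phi) -> Ep X <= Ep Y.
Proof.
move=> H; apply: ler_sum => phi _; case: (p_cases phi) => Hp; first by rewrite Hp !mul0r.
by rewrite ler_wpM2l // H.
Qed.

Lemma Ep_eq (X Y : T -> R) : (forall phi, 0 < p phi -> X phi = Y phi) -> Ep X = Ep Y.
Proof.
move=> H; apply: eq_bigr => phi _; case: (p_cases phi) => Hp; first by rewrite Hp !mul0r.
by rewrite H.
Qed.

Lemma Ep_telescope (F : T -> nat -> R) n :
  Ep (fun phi => F phi n - F phi 0%N) = \sum_(i < n) Ep (fun phi => F phi i.+1 - F phi i).
Proof.
rewrite /Ep exchange_big /=; apply: eq_bigr => phi _; rewrite -mulr_sumr.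
by rewrite -(big_mkord xpredT (fun i => F phi i.+1 - F phi i)) telescope_sumr.
Qed.


Section AVG.
Variables (b : nat) (Ez : 'I_b -> {set E}) (k : 'I_b -> nat) (z0 : 'I_b).
Hypothesis Hcover : forall e : E, exists z : 'I_b, e \in Ez z.
Hypothesis Hk : forall z, (0 < k z)%N.
Hypothesis asub : adaptive_submodular p f.
Variable c : 'I_b -> nat.
Variable g0 : R.
Hypothesis Hg0 : 0 < g0.
Hypothesis Hgc : forall z, g0 * (k z)%:R <= (c z)%:R.
Variable pim : policy E O.
Hypothesis Hgr : greedy_policy p Ez c (favg_marg p f) pim.
Variable pi' : policy E O.
Hypothesis Hfeas : feasible p Ez k pi'.
Local Notation N := (size (schedule c)).

Definition psiG phi := obs_after pim phi N.
Definition J i phi := join (psiG phi) (obs_after pi' phi i).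
Definition W phi (D : {set E}) := \sum_(e in D) favg_marg p f e (psiG phi).

Lemma J_C i phi : consistent phi (J i phi).
Proof. by apply: join_cons; exact: obs_consistent. Qed.

Lemma J_inv i phi phi' : consistent phi' (J i phi) ->
  consistent phi' (psiG phi) /\ consistent phi' (obs_after pi' phi i).
Proof. by apply: join_cons_inv; exact: obs_consistent. Qed.

Lemma J_P i phi phi' : 0 < p phi -> 0 < p phi' -> consistent phi' (J i phi) -> J i phi' = J i phi.
Proof.
move=> _ _ /J_inv [H1 H2]; by rewrite /J /psiG (obs_P H1) (obs_P H2).
Qed.

Lemma D_step i phi : pdom (J i.+1 phi) = pdom (J i phi) :|: oset (pi' (obs_after pi' phi i)).
Proof. by rewrite /J !pdom_join obs_afterS pdom_pstep setUA. Qed.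

Lemma avg_step i :
  Ep (fun phi => f (pdom (J i.+1 phi)) phi - f (pdom (J i phi)) phi) <=
  Ep (fun phi => W phi (pdom (J i.+1 phi)) - W phi (pdom (J i phi))).
Proof.
rewrite /Ep; under eq_bigr => phi _ do rewrite D_step.
rewrite (tower_step (Psi := J i) (@J_P i) (fun phi _ => J_C i phi)
          (nx := fun phi => pi' (obs_after pi' phi i))); last first.
  by move=> phi phi' _ _ /J_inv [_ H2]; rewrite (obs_P H2).
apply: ler_sum => phi _; case: (p_cases phi) => Hp; first by rewrite Hp !mul0r.
rewrite ler_wpM2l // D_step.
case: (pi' _) => [e|] /=; last by rewrite setU0 subrr.
case: (boolP (e \in pdom (J i phi))) => He.
  by rewrite favg_in // (setUidPl _) ?sub1set // subrr.
rewrite /W setUC big_setU1 //= addrK.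
apply: asub => //.
- apply: prob_gt0 Hp; exact: obs_consistent.
- apply: prob_gt0 Hp; exact: J_C.
- exact: subpr_join.
Qed.

Lemma EpD (X Y : T -> R) : Ep (fun phi => X phi + Y phi) = Ep X + Ep Y.
Proof. by rewrite /Ep -big_split; apply: eq_bigr => phi _; rewrite mulrDr. Qed.

Lemma EpZ a (X : T -> R) : Ep (fun phi => a * X phi) = a * Ep X.
Proof. by rewrite /Ep mulr_sumr; apply: eq_bigr => phi _; rewrite mulrCA. Qed.

Lemma Ep_sum n (X : T -> nat -> R) :
  Ep (fun phi => \sum_(t < n) X phi t) = \sum_(t < n) Ep (fun phi => X phi t).
Proof.
rewrite /Ep exchange_big /=; apply: eq_bigr => phi _; by rewrite mulr_sumr.
Qed.

Lemma avg_gains :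
  Ep (fun phi => \sum_(t < N) gain (favg_marg p f) pim phi t) <=
  Ep (fun phi => f (pdom (psiG phi)) phi).
Proof.
rewrite Ep_sum.
have -> : \sum_(t < N) Ep (fun phi => gain (favg_marg p f) pim phi t) =
   Ep (fun phi => f (pdom (obs_after pim phi N)) phi - f (pdom (obs_after pim phi 0)) phi).
  rewrite (Ep_telescope (fun phi t => f (pdom (obs_after pim phi t)) phi)); apply: eq_bigr => t _.
  rewrite /Ep; under [RHS]eq_bigr => phi _ do rewrite obs_afterS pdom_pstep.
  rewrite (tower_step (Psi := fun phi => obs_after pim phi t)
             (fun phi phi' _ _ Hc => obs_P Hc) (fun phi _ => obs_consistent pim phi t)
             (nx := fun phi => pim (obs_after pim phi t))) //.
  by move=> phi phi' _ _ Hc; rewrite (obs_P Hc).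
apply: Ep_le => phi Hp; rewrite gerDl oppr_le0; exact: f_ge0.
Qed.

Lemma avg_main :
  g0 * avg_value p f (selected pi') <= (g0 + 1) * avg_value p f (selected pim).
Proof.
set T' := #|E|.
have Ha : avg_value p f (selected pi') <= Ep (fun phi => f (pdom (J T' phi)) phi).
  apply: Ep_le => phi Hp; apply: mono => //.
  by rewrite /selected /J pdom_join subsetUr.
have Hb : Ep (fun phi => f (pdom (J T' phi)) phi) =
   Ep (fun phi => f (pdom (psiG phi)) phi) +
   Ep (fun phi => f (pdom (J T' phi)) phi - f (pdom (J 0 phi)) phi).
  rewrite -EpD; apply: Ep_eq => phi _.
  have -> : pdom (J 0 phi) = pdom (psiG phi).
    rewrite /J pdom_join; have -> : pdom (obs_after pi' phi 0) = set0.
      by apply/setP => x; rewrite !inE ffunE.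
    by rewrite setU0.
  by rewrite addrC subrK.
have Hc : Ep (fun phi => f (pdom (J T' phi)) phi - f (pdom (J 0 phi)) phi) <=
          Ep (fun phi => W phi (pdom (J T' phi)) - W phi (pdom (J 0 phi))).
  rewrite (Ep_telescope (fun phi i => f (pdom (J i phi)) phi)).
  rewrite (Ep_telescope (fun phi i => W phi (pdom (J i phi)))).
  apply: ler_sum => i _; exact: avg_step.
have Hd : Ep (fun phi => g0 * (W phi (pdom (J T' phi)) - W phi (pdom (J 0 phi)))) <=
          Ep (fun phi => \sum_(t < N) gain (favg_marg p f) pim phi t).
  apply: Ep_le => phi Hp.
  have HG0 : pdom (J 0 phi) = pdom (psiG phi).
    rewrite /J pdom_join; have -> : pdom (obs_after pi' phi 0) = set0.
      by apply/setP => x; rewrite !inE ffunE.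
    by rewrite setU0.
  have Hsub0 : pdom (J 0 phi) \subset pdom (J T' phi).
    by rewrite HG0 /J pdom_join subsetUl.
  rewrite /W (big_setID (pdom (J 0 phi)) (A := pdom (J T' phi))) /=.
  rewrite (setIidPr Hsub0) addrAC subrr add0r HG0.
  set A := pdom (J T' phi) :\: pdom (psiG phi).
  have HmA : in_matroid Ez k A.
    apply: in_matroid_sub (Hfeas Hp); apply/subsetP => x.
    by rewrite /A /J pdom_join !inE /selected => /andP [/negbTE -> /=].
  apply: (ratio (z0 := z0) Hcover Hk Hg0 Hgc (A := A)
     (w := fun e => favg_marg p f e (psiG phi))
     (g := fun t => gain (favg_marg p f) pim phi t)) => //.
    by move=> t Ht; rewrite /gain; case: (pim _) => [e|] //=; exact: favg_ge0.
  move=> e t; rewrite inE => /andP [HeG _] Ht Hez.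
  have [e' He' [_ Hn Hmax]] := greedy_step Hgr z0 Hp Ht.
  have Hsubt : subpr (obs_after pim phi t) (psiG phi) by apply: obs_sub; exact: ltnW.
  have Hpt : 0 < prob p (obs_after pim phi t) := prob_gt0 (obs_consistent _ _ _) Hp.
  rewrite /gain He' /=; apply: le_trans (Hmax e Hez _).
    apply: asub => //; apply: prob_gt0 Hp; exact: obs_consistent.
  by apply: contra HeG; apply/subsetP/subpr_pdom.
have He := avg_gains.
have -> : avg_value p f (selected pim) = Ep (fun phi => f (pdom (psiG phi)) phi).
  apply: Ep_eq => phi Hp; by rewrite (greedy_selected Hgr z0 Hp).
rewrite EpZ in Hd.
apply: le_trans (_ : g0 * (Ep (fun phi => f (pdom (psiG phi)) phi) +
   Ep (fun phi => W phi (pdom (J T' phi)) - W phi (pdom (J 0 phi)))) <= _).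
  rewrite (ler_wpM2l (ltW Hg0)) //; apply: le_trans Ha _.
  by rewrite Hb lerD2l.
rewrite mulrDr mulrDl mul1r lerD2l; exact: le_trans Hd He.
Qed.

End AVG.

End Basics.

Lemma gamma_le (R : realType) b (k : 'I_b -> nat) z :
  gamma R k <= ((k z)./2)%:R / (k z)%:R.
Proof. by rewrite /gamma (bigD1 z) //= ge_min lexx. Qed.

Lemma gamma_gt0 (R : realType) b (k : 'I_b -> nat) :
  (forall z, 1 < k z)%N -> 0 < gamma R k.
Proof.
move=> Hk; rewrite /gamma; apply: (big_ind (fun x : R => 0 < x)) => //.
  by move=> x y Hx Hy; rewrite lt_min Hx Hy.
move=> z _; apply: divr_gt0; rewrite ltr0n ?half_gt0 //; exact: ltn_trans (Hk z).
Qed.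

Lemma gamma_k (R : realType) b (k : 'I_b -> nat) z :
  (1 < k z)%N -> gamma R k * (k z)%:R <= ((k z)./2)%:R.
Proof.
move=> Hk; have Hk0 : (0 : R) < (k z)%:R by rewrite ltr0n; exact: ltn_trans Hk.
by rewrite -ler_pdivlMr // gamma_le.
Qed.

Unset Implicit Arguments.

Theorem theorem5 (R : realType) (E O : finType)
    (p : {ffun E -> O} -> R) (f : {set E} -> {ffun E -> O} -> R)
    (b : nat) (Ez : 'I_b -> {set E}) (k : 'I_b -> nat)
    (pi_mw pi_ma : policy E O) :
  is_prior p ->
  (0 < b)%N ->
  (forall z1 z2 : 'I_b, z1 != z2 -> [disjoint Ez z1 & Ez z2]) ->
  (forall e : E, exists z : 'I_b, e \in Ez z) ->
  (forall z : 'I_b, 2 <= k z <= #|Ez z|)%N ->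
  (forall S phi, 0 <= f S phi) ->
  wc_monotone p f -> wc_submodular p f ->
  adaptive_submodular p f -> minimal_dependency p f ->
  is_pi_mw p f Ez k pi_mw -> is_pi_ma p f Ez k pi_ma ->
  forall pi' : policy E O, feasible p Ez k pi' ->
    gamma R k / (gamma R k + 1) * wc_value p f (selected pi')
      <= wc_value p f (concat_selected pi_mw pi_ma)
    /\
    gamma R k / (gamma R k + 1) * avg_value p f (selected pi')
      <= avg_value p f (concat_selected pi_mw pi_ma).
Proof.
move=> [p_ge0 psum] Hb Hdisj Hcover Hk f_ge0 wmono wsub asub md Hmw Hma pi' Hfeas.
pose z0 : 'I_b := Ordinal Hb.
have Hk1 : forall z, (1 < k z)%N by move=> z; case/andP: (Hk z).
have Hk0 : forall z, (0 < k z)%N by move=> z; exact: ltn_trans (Hk1 z).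
set g := gamma R k.
have Hg0 : 0 < g := gamma_gt0 R Hk1.
have Hg1 : 0 < g + 1 by rewrite addr_gt0.
have Hgmw : forall z, g * (k z)%:R <= ((fun z => (k z)./2) z)%:R.
  by move=> z; exact: gamma_k.
have Hgma : forall z, g * (k z)%:R <= ((fun z => uphalf (k z)) z)%:R.
  move=> z; apply: le_trans (gamma_k R (Hk1 z)) _.
  by rewrite ler_nat /= uphalf_half leq_addl.
have fin : forall V' V, g * V' <= (g + 1) * V -> g / (g + 1) * V' <= V.
  by move=> V' V H; rewrite mulrAC ler_pdivrMr // [V * _]mulrC.
split; apply: fin.
- have [phi Hp] : exists phi, 0 < p phi.
    case: (boolP [exists phi, 0 < p phi]) => [/existsP //|/existsPn Hn].
    have H0 : \sum_phi p phi = 0.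
      by apply: big1 => phi _; apply/eqP; rewrite eq_le p_ge0 andbT leNgt Hn.
    by move: psum; rewrite H0 => /eqP; rewrite eq_sym oner_eq0.
  have [phi0 Hphi0 Hm] := min_over_ex (fun phi => f (concat_selected pi_mw pi_ma phi) phi)
                            (A := [set phi | 0 < p phi]) (x := phi) (R := R)
                            (ltac:(by rewrite inE)).
  rewrite /wc_value Hm; rewrite inE in Hphi0.
  apply: le_trans (wc_main p_ge0 md wmono f_ge0 z0 Hcover Hk0 wsub Hg0 Hgmw Hmw Hfeas Hphi0) _.
  rewrite (ler_wpM2l (ltW Hg1)) //; apply: (mono p_ge0 md wmono Hphi0); exact: subsetUl.
- apply: le_trans (avg_main p_ge0 md wmono f_ge0 z0 Hcover Hk0 asub Hg0 Hgma Hma Hfeas) _.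
  rewrite (ler_wpM2l (ltW Hg1)) //; apply: Ep_le => // phi Hp.
  apply: (mono p_ge0 md wmono Hp); exact: subsetUr.
Qed.
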